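(* Let $X$ be a locale with frame presentation $\mathcal{O}X=\langle G\mid R\rangle$, and regard $\mathcal{O}X$ as the locale whose frame is the Scott topology on the complete lattice $\mathcal{O}X$. If there exists a semi-open quotient locale map $e\colon\Sigma^{\Sigma^G}\to\mathcal{O}X$, then $X$ is locally compact (equivalently, $\mathcal{O}X$ is a continuous dcpo).
   Context: Frames are complete lattices with finite meets distributing over arbitrary joins; a locale $X$ is a frame $\mathcal{O}X$ and a locale map $f\colon X\to Y$ is a frame homomorphism $f^*\colon\mathcal{O}Y\to\mathcal{O}X$. $\Sigma$ is the Sierpiński locale; for a set $G$, $\Sigma^G$ is the locale whose frame is the free frame on $G$, and $\Sigma^{\Sigma^G}$ is its exponential (the locale of Scott opens of the free frame on $G$). A presentation $\mathcal{O}X=\langle G\mid R\rangle$ means $\mathcal{O}X$ is the quotient of the free frame on $G$ by the congruence generated by $R$. Scott topology: $V$ open iff upward closed and whenever the join of a directed set lies in $V$, some member does. A locale map $e\colon Y\to Z$ is a semi-open quotient if $e^*$ has a suplattice retraction, i.e. a map $r\colon\mathcal{O}Y\to\mathcal{O}Z$ preserving arbitrary joins with $r\circ e^*=\mathrm{id}$. Way-below: $a\ll b$ iff whenever $b\le\bigvee D$ with $D$ directed, $a\le d$ for some $d\in D$; a dcpo is continuous if each $b$ is the directed join of $\{a\mid a\ll b\}$. A locale $X$ is locally compact iff $\mathcal{O}X$ is continuous. *)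

(* Defs.v *)
From Stdlib Require Import List FunctionalExtensionality PropExtensionality ProofIrrelevance.
Set Implicit Arguments.

Definition image {A B : Type} (f : A -> B) (S : A -> Prop) : B -> Prop :=
  fun y => exists x, S x /\ y = f x.

Record frame := Frame {
  fcar :> Type;
  fle : fcar -> fcar -> Prop;
  fjoin : (fcar -> Prop) -> fcar;
  fmeet : fcar -> fcar -> fcar;
  ftop : fcar;
  fle_refl : forall x, fle x x;
  fle_trans : forall x y z, fle x y -> fle y z -> fle x z;
  fle_antisym : forall x y, fle x y -> fle y x -> x = y;
  fjoin_ub : forall S x, S x -> fle x (fjoin S);
  fjoin_least : forall S y, (forall x, S x -> fle x y) -> fle (fjoin S) y;
  fmeet_lb1 : forall x y, fle (fmeet x y) x;
  fmeet_lb2 : forall x y, fle (fmeet x y) y;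
  fmeet_glb : forall x y z, fle z x -> fle z y -> fle z (fmeet x y);
  ftop_max : forall x, fle x ftop;
  fdistr : forall a S, fmeet a (fjoin S) = fjoin (image (fmeet a) S)
}.
Arguments fle {f} _ _.
Arguments fjoin {f} _.
Arguments fmeet {f} _ _.
Arguments ftop {f}.

Definition frame_hom {A B : frame} (f : A -> B) : Prop :=
  (forall x y, f (fmeet x y) = fmeet (f x) (f y)) /\
  f ftop = ftop /\
  (forall S, f (fjoin S) = fjoin (image f S)).

Definition preserves_joins {A B : frame} (f : A -> B) : Prop :=
  forall S, f (fjoin S) = fjoin (image f S).

(** A locale map e : Y -> Z, given by e^* : OZ -> OY, is a semi-open quotient
    if e^* has a suplattice retraction r (r o e^* = id). *)
Definition semi_open_quotient {Z Y : frame} (estar : Z -> Y) : Prop :=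
  frame_hom estar /\
  exists r : Y -> Z, preserves_joins r /\ forall z, r (estar z) = z.

Definition directed {L : frame} (D : L -> Prop) : Prop :=
  (exists d, D d) /\
  (forall x y, D x -> D y -> exists z, D z /\ fle x z /\ fle y z).

Definition scott_open (L : frame) (U : L -> Prop) : Prop :=
  (forall x y, U x -> fle x y -> U y) /\
  (forall D, directed D -> U (fjoin D) -> exists d, D d /\ U d).

Definition way_below {L : frame} (a b : L) : Prop :=
  forall D, directed D -> fle b (fjoin D) -> exists d, D d /\ fle a d.

Definition continuous_frame (L : frame) : Prop :=
  forall b : L, directed (fun a => way_below a b) /\
                b = fjoin (fun a => way_below a b).

(** A locale X (given by its frame OX) is locally compact iff OX is continuous. *)
Definition locally_compact (X : frame) : Prop := continuous_frame X.

Section Scott.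
Variable L : frame.

Definition sopen := {U : L -> Prop | scott_open L U}.

Lemma sopen_ext (U V : sopen) :
  (forall x, proj1_sig U x <-> proj1_sig V x) -> U = V.
Proof.
destruct U as [U HU], V as [V HV]; simpl; intros H.
assert (E : U = V).
{ apply functional_extensionality; intro x; apply propositional_extensionality; auto. }
subst V; f_equal; apply proof_irrelevance.
Qed.

Definition sle (U V : sopen) : Prop := forall x, proj1_sig U x -> proj1_sig V x.

Lemma sunion_open (S : sopen -> Prop) :
  scott_open L (fun x => exists U, S U /\ proj1_sig U x).
Proof.
split.
- intros x y [U [SU Ux]] Hle; exists U; split; auto.
  destruct U as [U [Hu Hd]]; simpl in *; eauto.
- intros D dD [U [SU Ux]].
  pose proof (proj2 (proj2_sig U) D dD Ux) as [d [Dd Ud]].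
  exists d; split; auto. exists U; auto.
Qed.

Definition sjoin (S : sopen -> Prop) : sopen := exist _ _ (sunion_open S).

Lemma sinter_open (U V : sopen) :
  scott_open L (fun x => proj1_sig U x /\ proj1_sig V x).
Proof.
destruct U as [U [Hu Hd]], V as [V [Hv He]]; simpl; split.
- intros x y [Ux Vx] Hle; split; eauto.
- intros D dD [UD VD].
  destruct (Hd D dD UD) as [d1 [D1 U1]].
  destruct (He D dD VD) as [d2 [D2 V2]].
  destruct dD as [_ dD].
  destruct (dD d1 d2 D1 D2) as [z [Dz [l1 l2]]].
  exists z; split; [assumption | split; eauto].
Qed.

Definition smeet (U V : sopen) : sopen := exist _ _ (sinter_open U V).

Lemma stop_open : scott_open L (fun _ => True).
Proof.
split; auto. intros D [[d Dd] _] _; exists d; auto.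
Qed.

Definition stop : sopen := exist _ _ stop_open.

Definition scott_frame : frame.
Proof.
refine (@Frame sopen sle sjoin smeet stop _ _ _ _ _ _ _ _ _ _);
  unfold sle; simpl.
- auto.
- auto.
- intros x y H1 H2; apply sopen_ext; split; auto.
- intros S x Sx y Hy; exists x; auto.
- intros S y H x [U [SU Ux]]; exact (H U SU x Ux).
- intros x y z [H _]; exact H.
- intros x y z [_ H]; exact H.
- intros x y z H1 H2 w Hw; split; auto.
- auto.
- intros a S; apply sopen_ext; intros x; simpl; split.
  + intros [ax [U [SU Ux]]]. exists (smeet a U); split.
    * exists U; auto.
    * simpl; auto.
  + intros [W [[U [SU ->]] Wx]]; simpl in Wx; destruct Wx as [ax Ux].
    split; auto; exists U; auto.
Defined.
End Scott.

(** Realised as the downsets of the free meet-semilattice (finite subsets of G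
    under reverse inclusion), i.e. the families of finite subsets of G (coded as
    lists) that are upward closed under inclusion of their elements.  The
    generator g corresponds to {s | In g s}. *)
Section Free.
Variable G : Type.

Definition upclosed (U : list G -> Prop) : Prop :=
  forall s t, U s -> incl s t -> U t.

Definition fopen := {U : list G -> Prop | upclosed U}.

Lemma fopen_ext (U V : fopen) :
  (forall x, proj1_sig U x <-> proj1_sig V x) -> U = V.
Proof.
destruct U as [U HU], V as [V HV]; simpl; intros H.
assert (E : U = V).
{ apply functional_extensionality; intro x; apply propositional_extensionality; auto. }
subst V; f_equal; apply proof_irrelevance.
Qed.

Definition fle' (U V : fopen) : Prop := forall x, proj1_sig U x -> proj1_sig V x.

Lemma funion_up (S : fopen -> Prop) :
  upclosed (fun x => exists U, S U /\ proj1_sig U x).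
Proof.
intros s t [U [SU Us]] H; exists U; split; auto.
destruct U as [U HU]; simpl in *; eauto.
Qed.

Definition fjoin' (S : fopen -> Prop) : fopen := exist _ _ (funion_up S).

Lemma finter_up (U V : fopen) :
  upclosed (fun x => proj1_sig U x /\ proj1_sig V x).
Proof.
destruct U as [U HU], V as [V HV]; simpl; intros s t [Us Vs] H; split; eauto.
Qed.

Definition fmeet' (U V : fopen) : fopen := exist _ _ (finter_up U V).

Lemma ftop_up : upclosed (fun _ => True).
Proof. intros s t _ _; exact I. Qed.

Definition ftop' : fopen := exist _ _ ftop_up.

Definition free_frame : frame.
Proof.
refine (@Frame fopen fle' fjoin' fmeet' ftop' _ _ _ _ _ _ _ _ _ _);
  unfold fle'; simpl.
- auto.
- auto.
- intros x y H1 H2; apply fopen_ext; split; auto.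
- intros S x Sx y Hy; exists x; auto.
- intros S y H x [U [SU Ux]]; exact (H U SU x Ux).
- intros x y z [H _]; exact H.
- intros x y z [_ H]; exact H.
- intros x y z H1 H2 w Hw; split; auto.
- auto.
- intros a S; apply fopen_ext; intros x; simpl; split.
  + intros [ax [U [SU Ux]]]. exists (fmeet' a U); split.
    * exists U; auto.
    * simpl; auto.
  + intros [W [[U [SU ->]] Wx]]; simpl in Wx; destruct Wx as [ax Ux].
    split; auto; exists U; auto.
Defined.

Lemma gen_up (g : G) : upclosed (fun s => In g s).
Proof. intros s t H Hi; auto. Qed.
Definition free_gen (g : G) : free_frame := exist _ _ (gen_up g).
End Free.

Definition frame_congruence {F : frame} (C : F -> F -> Prop) : Prop :=
  (forall x, C x x) /\
  (forall x y, C x y -> C y x) /\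
  (forall x y z, C x y -> C y z -> C x z) /\
  (forall a b a' b', C a b -> C a' b' -> C (fmeet a a') (fmeet b b')) /\
  (forall (I : Type) (f g : I -> F), (forall i, C (f i) (g i)) ->
     C (fjoin (fun y => exists i, y = f i)) (fjoin (fun y => exists i, y = g i))).

(** OX = < G | R > : OX is (isomorphic, via a surjective frame homomorphism q
    from the free frame on G) to the quotient of the free frame on G by the
    frame congruence generated by the relations R. *)
Definition presented_by (X : frame) (G : Type)
    (R : free_frame G -> free_frame G -> Prop) : Prop :=
  exists q : free_frame G -> X,
    frame_hom q /\
    (forall x : X, exists a, q a = x) /\
    (forall a b, q a = q b <->
       (forall C, frame_congruence C -> (forall u v, R u v -> C u v) -> C a b)).
Arguments presented_by X G R : clear implicits.

(* Main.v *)
Require Import Defs.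
From Stdlib Require Import List Classical.

Lemma mono_meet {A B : frame} (f : A -> B) :
  (forall x y, f (fmeet x y) = fmeet (f x) (f y)) -> forall x y, fle x y -> fle (f x) (f y).
Proof.
intros Hm x y H.
assert (E : fmeet x y = x).
{ apply fle_antisym; [apply fmeet_lb1 | apply fmeet_glb; [apply fle_refl | exact H]]. }
rewrite <- E, Hm. apply fmeet_lb2.
Qed.

Lemma mono_join {A B : frame} (f : A -> B) :
  preserves_joins f -> forall x y, fle x y -> fle (f x) (f y).
Proof.
intros Hj x y H.
set (S := fun z => z = x \/ z = y).
assert (E : fjoin S = y).
{ apply fle_antisym.
  - apply fjoin_least; intros z [-> | ->]; [exact H | apply fle_refl].
  - apply fjoin_ub; right; reflexivity. }
rewrite <- E, Hj. apply fjoin_ub. exists x; split; [left|]; reflexivity.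
Qed.

Section Alg.
Variable G : Type.

Lemma KL_up (L : list (list G)) : upclosed (fun t => exists l, In l L /\ incl l t).
Proof. intros s t [l [Hl Hi]] H. exists l; split; auto. eapply incl_tran; eauto. Qed.

Definition KL (L : list (list G)) : free_frame G := exist _ _ (KL_up L).

Lemma finite_dir (L : list (list G)) (D : free_frame G -> Prop) : directed D ->
  (forall l, In l L -> exists d, D d /\ proj1_sig d l) ->
  exists d, D d /\ forall l, In l L -> proj1_sig d l.
Proof.
intros dD. induction L as [|l0 L IH]; intros H.
- destruct (proj1 dD) as [d Dd]. exists d; split; auto. intros l [].
- destruct (H l0 (or_introl eq_refl)) as [d0 [D0 P0]].
  destruct IH as [d1 [D1 P1]]. { intros l Hl; apply H; right; auto. }
  destruct (proj2 dD d0 d1 D0 D1) as [z [Dz [l0z l1z]]].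
  exists z; split; auto. intros l [<- | Hl].
  + apply l0z; auto.
  + apply l1z; auto.
Qed.

Lemma upKL_open (L : list (list G)) :
  scott_open (free_frame G) (fun s => fle (KL L) s).
Proof.
split.
- intros x y H1 H2; eapply fle_trans; eauto.
- intros D dD H.
  destruct (@finite_dir L D dD) as [d [Dd Pd]].
  + intros l Hl. assert (Hk : proj1_sig (KL L) l).
    { exists l; split; auto. apply incl_refl. }
    specialize (H l Hk). simpl in H. destruct H as [U [DU Ul]]. eauto.
  + exists d; split; auto. intros t [l [Hl Hi]].
    destruct d as [d Hd]; simpl in *. eapply Hd; eauto.
Qed.

Definition upKL (L : list (list G)) : scott_frame (free_frame G) := exist _ _ (upKL_open L).

Lemma algebraic (W : scott_frame (free_frame G)) (s : free_frame G) :
  proj1_sig W s -> exists L, proj1_sig W (KL L) /\ fle (KL L) s.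
Proof.
intros Ws.
set (D := fun k : free_frame G => exists L, (forall l, In l L -> proj1_sig s l) /\ k = KL L).
assert (dD : directed D).
{ split.
  - exists (KL nil). exists nil; split; auto. intros l [].
  - intros x y [L1 [H1 ->]] [L2 [H2 ->]]. exists (KL (L1 ++ L2)); split.
    + exists (L1 ++ L2); split; auto. intros l Hl; apply in_app_or in Hl; destruct Hl; auto.
    + split; intros t [l [Hl Hi]]; exists l; split; auto; apply in_or_app; auto. }
assert (E : fjoin D = s).
{ apply fopen_ext. intros t; simpl; split.
  - intros [U [[L [HL ->]] [l [Hl Hi]]]]. destruct s as [s Hs]; simpl in *. eapply Hs; eauto.
  - intros Ht. exists (KL (t :: nil)). split.
    + exists (t :: nil); split; auto. intros l [<- | []]; auto.
    + exists t; split; [left; auto | apply incl_refl]. }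
rewrite <- E in Ws.
destruct (proj2 (proj2_sig W) D dD Ws) as [d [[L [HL ->]] Wd]].
exists L; split; auto. intros t [l [Hl Hi]]. destruct s as [s Hs]; simpl in *. eapply Hs; eauto.
Qed.
End Alg.
Arguments KL {G} L.
Arguments upKL {G} L.
Arguments algebraic {G} W s _.

Lemma notle_open (X : frame) (v : X) : scott_open X (fun x => ~ fle x v).
Proof.
split.
- intros x y Hx Hxy Hyv. apply Hx. eapply fle_trans; eauto.
- intros D dD H. apply NNPP; intro C. apply H. apply fjoin_least.
  intros x Dx. apply NNPP; intro Hn. apply C. exists x; auto.
Qed.

Definition Onot {X : frame} (v : X) : scott_frame X := exist _ _ (@notle_open X v).

Lemma key (X : frame) (G : Type)
  (estar : scott_frame X -> scott_frame (free_frame G)) (r : scott_frame (free_frame G) -> scott_frame X)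
  (He : frame_hom estar) (Hr : preserves_joins r) (Hre : forall z, r (estar z) = z)
  (U : scott_frame X) (b : X) :
  proj1_sig U b -> exists a, proj1_sig U a /\
     exists V : scott_frame X, proj1_sig V b /\ forall x, proj1_sig V x -> fle a x.
Proof.
intros Ub.
set (W := estar U).
assert (bW : proj1_sig (r W) b) by (unfold W; rewrite Hre; exact Ub).
set (T := fun V => exists L, proj1_sig W (KL L) /\ V = upKL L).
assert (HWT : fle W (fjoin T)).
{ intros s Hs. destruct (algebraic W s Hs) as [L [HL Hle]].
  exists (upKL L); split; [exists L; auto | exact Hle]. }
pose proof (mono_join r Hr _ _ HWT) as H1. rewrite Hr in H1.
destruct (H1 b bW) as [V' [[Y [[L [HL ->]] ->]] HbV]].
set (V := r (upKL L)) in *.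
destruct (classic (exists a, proj1_sig U a /\ forall x, proj1_sig V x -> fle a x)) as [Hc | Hc].
{ destruct Hc as [a [Ua Ha]]. exists a; split; auto. exists V; auto. }
exfalso.
set (S := fun O' => exists v, proj1_sig V v /\ O' = Onot v).
assert (HUS : fle U (fjoin S)).
{ intros a Ua. assert (Hn : ~ forall x, proj1_sig V x -> fle a x).
  { intro Hall. apply Hc; exists a; auto. }
  apply not_all_ex_not in Hn. destruct Hn as [v Hv].
  apply imply_to_and in Hv. destruct Hv as [Vv Nav].
  exists (Onot v); split; [exists v; auto | exact Nav]. }
destruct He as [Hm [_ Hj]].
pose proof (mono_meet estar Hm _ _ HUS) as H2. rewrite Hj in H2.
destruct (H2 (KL L) HL) as [Y [[O' [[v [Vv ->]] ->]] HK]].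
assert (H3 : fle (upKL L) (estar (Onot v))).
{ intros s Hs. destruct (estar (Onot v)) as [Z [Zu Zd]]; simpl in *. eapply Zu; eauto. }
pose proof (mono_join r Hr _ _ H3) as H4. rewrite Hre in H4.
apply (H4 v Vv). apply fle_refl.
Qed.

Theorem proposition3p9 (X : frame) (G : Type)
    (R : free_frame G -> free_frame G -> Prop)
    (Hpres : presented_by X G R) :
  (exists estar : scott_frame X -> scott_frame (free_frame G),
      semi_open_quotient estar) ->
  locally_compact X.
Proof.
intros [estar [He [r [Hr Hre]]]] b. split.
- split.
  + exists (fjoin (fun _ => False)). intros D [[d Dd] _] _. exists d; split; auto.
    apply fjoin_least; intros x [].
  + intros x y Hx Hy. exists (fjoin (fun w => w = x \/ w = y)). split; [|split].
    * intros D dD Hb. destruct (Hx D dD Hb) as [dx [Dx lx]].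
      destruct (Hy D dD Hb) as [dy [Dy ly]].
      destruct (proj2 dD dx dy Dx Dy) as [z [Dz [l1 l2]]].
      exists z; split; auto. apply fjoin_least; intros w [-> | ->]; eapply fle_trans; eauto.
    * apply fjoin_ub; auto.
    * apply fjoin_ub; auto.
- apply fle_antisym.
  + apply NNPP; intro C.
    set (c := fjoin (fun a => way_below a b)) in *.
    destruct (@key X G estar r He Hr Hre (Onot c) b C) as [a [Ua [V [Vb HV]]]].
    apply Ua. apply fjoin_ub. intros D dD Hb.
    destruct (proj2 (proj2_sig V) D dD) as [d [Dd Vd]].
    * destruct V as [V [Vu Vd]]; simpl in *. eapply Vu; eauto.
    * exists d; split; auto.
  + apply fjoin_least. intros a Ha.
    destruct (Ha (fun w => w = b)) as [d [-> H]]; auto.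
    * split; [exists b; auto|]. intros x y -> ->; exists b; split; auto; split; apply fle_refl.
    * apply fjoin_ub; auto.
Qed.
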